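(* Let $A=\{a_1,\ldots,a_n\}$ and $B=\{b_1,\ldots,b_m\}$ be finite point sets in $\mathbb{R}^2$ with $m\le n$, and let $\mathcal{D}_{B,A}$ be their partial-matching subdivision. Then every edge of $\mathcal{D}_{B,A}$ has a normal vector of the form $a_j-a_i$ for suitable $i\neq j\in\{1,\ldots,n\}$.
   Context: An injective assignment (matching) is an injective map $\pi:B\to A$; write $a_{\pi(i)}$ for the point assigned to $b_i$. For a translation $t\in\mathbb{R}^2$ its cost is $f(\pi,t)=\sum_{i=1}^m\|b_i+t-a_{\pi(i)}\|^2=c_\pi+\langle t,d_\pi\rangle+m\|t\|^2$, where $c_\pi=\sum_{i=1}^m\|b_i-a_{\pi(i)}\|^2$ and $d_\pi=2\sum_{i=1}^m(b_i-a_{\pi(i)})$. The partial-matching subdivision $\mathcal{D}_{B,A}$ is the subdivision of the plane in which two translations $t_1,t_2$ lie in the same region iff the set of injections minimizing $f(\cdot,t)$ is the same at $t_1$ and $t_2$; equivalently, it is the minimization diagram (projection onto the $t$-plane) of the lower envelope $\mathcal{E}_{B,A}(t)=\min_{\pi}(c_\pi+\langle t,d_\pi\rangle)$ of finitely many planes. It is a convex subdivision of the plane into convex polygonal regions (open two-dimensional faces), edges and vertices. *)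

(* Defs.v *)
From mathcomp Require Import all_boot all_order all_algebra.
From mathcomp Require Import reals.
Set Implicit Arguments. Unset Strict Implicit. Unset Printing Implicit Defensive.
Import Order.TTheory GRing.Theory Num.Theory.
Local Open Scope ring_scope.

Section Defs.
Variable R : realType.
Notation pt := (R * R)%type.

Definition padd (p q : pt) : pt := (p.1 + q.1, p.2 + q.2).
Definition psub (p q : pt) : pt := (p.1 - q.1, p.2 - q.2).
Definition pscale (s : R) (p : pt) : pt := (s * p.1, s * p.2).
Definition dot (p q : pt) : R := p.1 * q.1 + p.2 * q.2.
Definition sqnorm (p : pt) : R := dot p p.

Variables (n m : nat) (A : 'I_n -> pt) (B : 'I_m -> pt).

Definition cost (pi : {ffun 'I_m -> 'I_n}) (t : pt) : R :=
  \sum_(i < m) sqnorm (psub (padd (B i) t) (A (pi i))).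

Definition is_opt (t : pt) (pi : {ffun 'I_m -> 'I_n}) : Prop :=
  injective pi /\
  forall sigma : {ffun 'I_m -> 'I_n}, injective sigma -> cost pi t <= cost sigma t.

(* the face (cell) of the partial-matching subdivision containing t0:
   all translations with the same set of optimal injections as t0 *)
Definition cell (t0 t : pt) : Prop :=
  forall pi : {ffun 'I_m -> 'I_n}, is_opt t pi <-> is_opt t0 pi.

Definition is_edge_cell (t0 : pt) : Prop :=
  (exists t1 t2, cell t0 t1 /\ cell t0 t2 /\ t1 <> t2) /\
  (exists v : pt, v <> (0, 0) /\
     forall t, cell t0 t -> exists s : R, t = padd t0 (pscale s v)).

End Defs.

(* Main.v *)
Require Import Defs.
From mathcomp Require Import all_boot all_order all_algebra.
From mathcomp Require Import reals ring lra.
From Stdlib Require Import Classical.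
Import Order.TTheory GRing.Theory Num.Theory.
Local Open Scope ring_scope.

Section Aux.
Variable R : realType.
Variables n m : nat.
Variables (A : 'I_n -> (R * R)%type) (B : 'I_m -> (R * R)%type).

Lemma cost_split (tau rho pi sigma : {ffun 'I_m -> 'I_n}) t :
  (forall i, (tau i = pi i /\ rho i = sigma i) \/ (tau i = sigma i /\ rho i = pi i)) ->
  cost A B tau t + cost A B rho t = cost A B pi t + cost A B sigma t.
Proof.
move=> H; rewrite /cost -!big_split /=; apply: eq_bigr => i _.
by case: (H i) => [[-> ->]|[-> ->]]; rewrite // addrC.
Qed.

Lemma costE (x : {ffun 'I_m -> 'I_n}) t1 t2 :
  cost A B x t1 - cost A B x t2 =
  \sum_(i < m) (sqnorm t1 - sqnorm t2 + 2 * dot (B i) (psub t1 t2))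
  - \sum_(i < m) 2 * dot (A (x i)) (psub t1 t2).
Proof.
rewrite /cost -!sumrB; apply: eq_bigr => i _.
rewrite /sqnorm /dot /psub /padd /=; ring.
Qed.

Definition Lf (x : {ffun 'I_m -> 'I_n}) t0 u :=
  \sum_(i < m) 2 * dot (psub (padd (B i) t0) (A (x i))) u.

Lemma costL (x : {ffun 'I_m -> 'I_n}) t0 u e :
  cost A B x (padd t0 (pscale e u)) =
  cost A B x t0 + e * Lf x t0 u + e ^+ 2 * \sum_(i < m) sqnorm u.
Proof.
rewrite /cost /Lf !mulr_sumr -!big_split; apply: eq_bigr => i _.
rewrite /sqnorm /dot /psub /padd /pscale /=; ring.
Qed.

Lemma LfE (x : {ffun 'I_m -> 'I_n}) t0 u :
  Lf x t0 u = \sum_(i < m) 2 * dot (padd (B i) t0) u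
              - \sum_(i < m) 2 * dot (A (x i)) u.
Proof.
rewrite /Lf -sumrB; apply: eq_bigr => i _.
rewrite /dot /psub /padd /=; ring.
Qed.

Lemma sum_img (pi sigma : {ffun 'I_m -> 'I_n}) (W : 'I_n -> R) :
  injective pi -> injective sigma ->
  (forall i, exists k, sigma k = pi i) -> (forall i, exists k, pi k = sigma i) ->
  \sum_(i < m) W (pi i) = \sum_(i < m) W (sigma i).
Proof.
move=> hp hs h1 h2.
have e : [set pi x | x in [set: 'I_m]] = [set sigma x | x in [set: 'I_m]].
  apply/setP => k; apply/imsetP/imsetP => -[x _ ->].
    by case: (h1 x) => y <-; exists y.
  by case: (h2 x) => y <-; exists y.
transitivity (\sum_(k in [set pi x | x in [set: 'I_m]]) W k).
  rewrite big_imset /=; last exact: in2W.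
  by apply: eq_bigl => i; rewrite in_setT.
rewrite e big_imset /=; last exact: in2W.
by apply: eq_bigl => i; rewrite in_setT.
Qed.

Lemma chain (d : nat) (pi sigma : {ffun 'I_m -> 'I_n}) i0 :
  injective pi -> injective sigma -> (forall i, sigma i != pi i0) ->
  (#|[pred i | pi i != sigma i]| <= d)%N ->
  exists tau rho : {ffun 'I_m -> 'I_n},
    [/\ injective tau, injective rho,
     (forall i, (tau i = pi i /\ rho i = sigma i) \/ (tau i = sigma i /\ rho i = pi i)),
     tau i0 = sigma i0 &
     exists j, (forall i, pi i != j) /\
       forall W : 'I_n -> R, \sum_(i < m) (W (tau i) - W (pi i)) = W j - W (pi i0)].
Proof.
move=> hp; elim: d sigma i0 => [|d IH] sigma i0 hs hi0 hcard.
  have : (0 < #|[pred i | pi i != sigma i]|)%N.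
    by apply/card_gt0P; exists i0; rewrite inE eq_sym; exact: hi0.
  by move: hcard; rewrite leqn0 => /eqP ->.
case: (pickP [pred j | pi j == sigma i0]) => [i1 /= /eqP h1 | hnone].
  pose sigma' := [ffun i => if i == i0 then pi i0 else sigma i].
  have hi01 : i0 != i1.
    by apply/eqP => e; move: (hi0 i0); rewrite -h1 e eqxx.
  have hs' : injective sigma'.
    move=> x y; rewrite !ffunE.
    case: eqP => [->|hx]; case: eqP => [->|hy] //.
    - by move=> e; move: (hi0 y); rewrite e eqxx.
    - by move=> e; move: (hi0 x); rewrite e eqxx.
    - exact: hs.
  have hi1 : forall i, sigma' i != pi i1.
    move=> i; rewrite ffunE; case: (eqVneq i i0) => [_|hi].
      by rewrite (inj_eq hp).
    by rewrite h1 (inj_eq hs).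
  have hcard' : (#|[pred i | pi i != sigma' i]| <= d)%N.
    rewrite -ltnS; apply: leq_trans hcard; apply: proper_card.
    apply/properP; split.
      apply/subsetP => i; rewrite !inE ffunE; case: (eqVneq i i0) => // ->.
      by rewrite eqxx.
    exists i0; first by rewrite inE eq_sym; exact: hi0.
    by rewrite inE ffunE eqxx eqxx.
  have [tau' [rho' [htau' hrho' hpw' htau1 [j [hj hW]]]]] := IH sigma' i1 hs' hi1 hcard'.
  have ht0 : tau' i0 = pi i0 /\ rho' i0 = pi i0.
    by case: (hpw' i0) => -[-> ->]; rewrite ffunE eqxx.
  pose tau := [ffun i => if i == i0 then sigma i0 else tau' i].
  have hne : forall i, i != i0 -> tau' i != sigma i0.
    move=> i hi; case: (eqVneq i i1) => [->|hi1'].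
      have hi10 : i1 != i0 by rewrite eq_sym.
      by rewrite htau1 ffunE (negbTE hi10) (inj_eq hs).
    case: (hpw' i) => -[-> _].
      by rewrite -h1 (inj_eq hp).
    by rewrite ffunE (negbTE hi) (inj_eq hs).
  exists tau, rho'; split => //.
  - move=> x y; rewrite !ffunE.
    case: eqP => [->|hx]; case: eqP => [->|hy] //.
    + by move=> e; move: (hne y (introN eqP hy)); rewrite e eqxx.
    + by move=> e; move: (hne x (introN eqP hx)); rewrite e eqxx.
    + exact: htau'.
  - move=> i; rewrite ffunE; case: eqP => [->|hi].
      by right; split=> //; case: ht0.
    by case: (hpw' i); rewrite ffunE (introF eqP hi); [left|right].
  - by rewrite ffunE eqxx.
  - exists j; split => // W.
    have := hW W; rewrite (bigD1 i0) //= (proj1 ht0) subrr add0r => hW'.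
    rewrite (bigD1 i0) //= ffunE eqxx.
    have -> : \sum_(i < m | i != i0) (W (tau i) - W (pi i)) =
              \sum_(i < m | i != i0) (W (tau' i) - W (pi i)).
      by apply: eq_bigr => i hi; rewrite ffunE (negbTE hi).
    rewrite hW' -h1; ring.
pose tau := [ffun i => if i == i0 then sigma i0 else pi i].
pose rho := [ffun i => if i == i0 then pi i0 else sigma i].
exists tau, rho; split.
- move=> x y; rewrite !ffunE.
  case: eqP => [->|hx]; case: eqP => [->|hy] //.
  + by move=> e; move: (hnone y); rewrite /= e eqxx.
  + by move=> e; move: (hnone x); rewrite /= e eqxx.
  + exact: hp.
- move=> x y; rewrite !ffunE.
  case: eqP => [->|hx]; case: eqP => [->|hy] //.
  + by move=> e; move: (hi0 y); rewrite e eqxx.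
  + by move=> e; move: (hi0 x); rewrite e eqxx.
  + exact: hs.
- by move=> i; rewrite !ffunE; case: eqP => [->|_]; [right|left].
- by rewrite ffunE eqxx.
- exists (sigma i0); split.
    by move=> i; apply/negbT; apply: hnone.
  move=> W; rewrite (bigD1 i0) //= ffunE eqxx big1 ?addr0 // => i hi.
  by rewrite ffunE (negbTE hi) subrr.
Qed.

Lemma exists_opt t : (m <= n)%N -> exists pi, is_opt A B t pi.
Proof.
move=> hmn.
pose f0 : {ffun 'I_m -> 'I_n} := [ffun i => widen_ord hmn i].
have hf0 : injectiveb f0.
  by apply/injectiveP => x y; rewrite !ffunE => /(congr1 val) /= /val_inj.
case: (@arg_minP _ _ _ f0 [pred s : {ffun 'I_m -> 'I_n} | injectiveb s] (fun s => cost A B s t) hf0) => pi hpi hmin.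
exists pi; split; first exact/injectiveP.
by move=> s /injectiveP hs; apply: hmin.
Qed.

Lemma eps_exists (T : finType) (P : pred T) (f g : T -> R) :
  (forall x, P x -> 0 < f x) ->
  exists2 e, 0 < e & forall x, P x -> 0 < f x + e * g x.
Proof.
move=> hf.
pose M := \sum_(x | P x) `|g x| / f x.
have hM : 0 <= M.
  by apply: sumr_ge0 => x Px; apply: divr_ge0 => //; apply: ltW; apply: hf.
have hM1 : 0 < M + 1 by lra.
exists (M + 1)^-1; first by rewrite invr_gt0.
move=> x Px.
have fx := hf x Px.
have hx : `|g x| / f x <= M.
  rewrite /M (bigD1 x) //= lerDl; apply: sumr_ge0 => y /andP [Py _].
  by apply: divr_ge0 => //; apply: ltW; apply: hf.
move: hx; rewrite ler_pdivrMr // => hx.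
have hg : - g x <= `|g x| by rewrite -normrN ler_norm.
have h2 : 0 < (M + 1) * f x + g x.
  rewrite mulrDl mul1r; lra.
have -> : f x + (M + 1)^-1 * g x = (M + 1)^-1 * ((M + 1) * f x + g x).
  by rewrite mulrDr mulrA mulVf ?mul1r // gt_eqF.
by apply: mulr_gt0 => //; rewrite invr_gt0.
Qed.

End Aux.
Arguments cost_split {R n m} A B tau rho pi sigma t _.
Arguments costE {R n m} A B x t1 t2.
Arguments Lf {R n m} A B x t0 u.
Arguments costL {R n m} A B x t0 u e.
Arguments LfE {R n m} A B x t0 u.
Arguments sum_img {R n m} pi sigma W _ _ _ _.
Arguments chain {R n m} d pi sigma i0 _ _ _ _.
Arguments exists_opt {R n m} A B t _.
Arguments eps_exists {R} T P f g _.

Theorem lemma2 (R : realType) (n m : nat)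
  (A : 'I_n -> (R * R)%type) (B : 'I_m -> (R * R)%type)
  (hA : injective A) (hB : injective B) (hmn : (m <= n)%N)
  (t0 : (R * R)%type) :
  is_edge_cell A B t0 ->
  exists i j : 'I_n, i <> j /\
    forall t1 t2, cell A B t0 t1 -> cell A B t0 t2 ->
      dot (psub (A j) (A i)) (psub t1 t2) = 0.
Proof.
move=> [_ [v [hv0 hline]]].
have [pi0 hpi0] := exists_opt A B t0 hmn.
case: (classic (exists (pi sigma : {ffun 'I_m -> 'I_n}) (i0 : 'I_m),
    [/\ is_opt A B t0 pi, is_opt A B t0 sigma & forall i, sigma i != pi i0])).
  move=> [pi [sigma [i0 [hpi hsig hi0]]]].
  have [tau [rho [htau hrho hpw _ [j [hj hW]]]]] :=
    chain (R:=R) #|[pred i | pi i != sigma i]| pi sigma i0 hpi.1 hsig.1 hi0 (leqnn _).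
  exists (pi i0), j; split.
    by move=> e; move: (hj i0); rewrite e eqxx.
  have heq : forall t, cell A B t0 t -> cost A B tau t = cost A B pi t.
    move=> t ct.
    have hp := (ct pi).2 hpi; have hs := (ct sigma).2 hsig.
    have h1 := hp.2 tau htau; have h2 := hs.2 rho hrho.
    have h3 := cost_split A B tau rho pi sigma t hpw.
    lra.
  move=> t1 t2 c1 c2.
  have e1 := costE A B tau t1 t2; have e2 := costE A B pi t1 t2.
  rewrite (heq t1 c1) (heq t2 c2) e2 in e1.
  have e3 : \sum_(i < m) 2 * dot (A (tau i)) (psub t1 t2) =
            \sum_(i < m) 2 * dot (A (pi i)) (psub t1 t2) by lra.
  have := hW (fun k => 2 * dot (A k) (psub t1 t2)).
  rewrite sumrB e3 subrr /dot /psub /= => h.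
  lra.
move=> hno.
have himg : forall pi sigma : {ffun 'I_m -> 'I_n}, is_opt A B t0 pi -> is_opt A B t0 sigma ->
    forall i, exists k, sigma k = pi i.
  move=> pi sigma hp hs i; apply: NNPP => hn; apply: hno.
  exists pi, sigma, i; split => // k; apply/eqP => e; apply: hn; by exists k.
pose u : (R * R)%type := (- v.2, v.1).
have hL : forall pi, is_opt A B t0 pi -> Lf A B pi t0 u = Lf A B pi0 t0 u.
  move=> pi hp; rewrite !LfE.
  by rewrite (sum_img pi pi0 (fun k => 2 * dot (A k) u) hp.1 hpi0.1
    (himg pi pi0 hp hpi0) (himg pi0 pi hpi0 hp)).
have hc : forall pi, is_opt A B t0 pi -> cost A B pi t0 = cost A B pi0 t0.
  move=> pi hp; have := hp.2 pi0 hpi0.1; have := hpi0.2 pi hp.1; lra.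
pose P := [pred s : {ffun 'I_m -> 'I_n} | injectiveb s && (cost A B pi0 t0 < cost A B s t0)].
have [e he hpos] := eps_exists _ P (fun s => cost A B s t0 - cost A B pi0 t0)
                               (fun s => Lf A B s t0 u - Lf A B pi0 t0 u)
                               ltac:(move=> s /andP [_ h]; lra).
pose t := padd t0 (pscale e u).
have hS : forall s : {ffun 'I_m -> 'I_n}, injective s -> ~ is_opt A B t0 s -> P s.
  move=> s hs hn; rewrite /P inE; apply/andP; split; first exact/injectiveP.
  rewrite ltNge; apply/negP => hle; apply: hn; split => // s' hs'.
  exact: le_trans hle (hpi0.2 s' hs').
have hct : cell A B t0 t.
  move=> pi; split.
    move=> hp; case: (classic (is_opt A B t0 pi)) => // hn.
    have := hpos pi (hS pi hp.1 hn); have := hp.2 pi0 hpi0.1.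
    rewrite /t !costL => h1 h2; exfalso.
    move: h1 h2; set Q := \sum_(i < m) _; rewrite mulrBr; lra.
  move=> hp; split; first exact: hp.1.
  move=> s hs; rewrite /t !costL (hc pi hp) (hL pi hp).
  case: (classic (is_opt A B t0 s)) => hn.
    by rewrite (hc s hn) (hL s hn).
  have := hpos s (hS s hs hn); set Q := \sum_(i < m) _; rewrite mulrBr; lra.
have [s hts] := hline t hct.
move: hts; rewrite /t /padd /pscale /u /= => -[] /addrI h1 /addrI h2.
have E : e * (v.1 * v.1 + v.2 * v.2) = 0.
  have -> : e * (v.1 * v.1 + v.2 * v.2) = (e * v.1) * v.1 - (e * - v.2) * v.2 by ring.
  rewrite h1 h2; ring.
have sqr_gt0 : forall x : R, x != 0 -> 0 < x ^+ 2.
  by move=> x hx; rewrite exprn_even_gt0 // hx orbT.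
have hq : 0 < v.1 * v.1 + v.2 * v.2.
  case: (eqVneq v.1 0) => [e1|n1].
    case: (eqVneq v.2 0) => [e2|n2].
      by exfalso; apply: hv0; rewrite [v]surjective_pairing e1 e2.
    rewrite e1 mul0r add0r -expr2; exact: sqr_gt0 _ n2.
  have := sqr_ge0 v.2; rewrite -!expr2 => hv2.
  have := sqr_gt0 _ n1; lra.
move: E => /eqP; rewrite mulf_eq0 => /orP [/eqP he0|/eqP hq0].
  by move: he; rewrite he0 ltxx.
by move: hq; rewrite hq0 ltxx.
Qed.
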